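(* Let $f:E_A^{\mathbb N}\to\mathbb R$ be a strongly regular Hölder-type function, $\delta>0$ with $P(\delta f)=0$, and fix $\rho\in E_A^{\mathbb N}$. Define, for $T>0$, $$m(T):=\sup\{|\omega|:\omega\in E^*_\rho,\ S_{|\omega'|}f(\omega'\rho)\ge -T\ \text{for all }\omega'\in E^*_\rho\text{ with }|\omega'|\le|\omega|\},$$ $$M(T):=\sup\{|\omega|:\omega\in E^*_\rho,\ S_{|\omega|}f(\omega\rho)\ge -T\},$$ with the convention $\sup\emptyset=-\infty$. Then both limits $\lim_{T\to\infty}m(T)/T$ and $\lim_{T\to\infty}M(T)/T$ exist (in the extended real line).
   Context: $E$ is a countable set, $A:E\times E\to\{0,1\}$, $E_A^{\mathbb N}$ the set of sequences $\rho$ with $A_{\rho_i\rho_{i+1}}=1$ for all $i$, $E_A^n$ the admissible words of length $n$, $E_A^*=\bigcup_{n\ge1}E_A^n$. The subshift is finitely irreducible: there is a finite set $\Omega$ of words such that for all $e,e'\in E$ some $\omega\in\Omega$ makes $e\omega e'$ admissible. $E^*_\rho=\{\omega\in E_A^*:\omega\rho \text{ admissible}\}$. $\sigma$ is the shift, $S_nf=\sum_{j<n}f\circ\sigma^j$, $[\omega]$ the cylinder of sequences beginning with $\omega$. $|\rho\wedge\rho'|$ is the length of the common initial block; for $\alpha>0$, $V_\alpha(f)=\sup_{n\ge1}\sup\{|f(\rho)-f(\rho')|e^{\alpha(n-1)}:|\rho\wedge\rho'|\ge n\}$, and $f$ is Hölder-type if $V_\alpha(f)<\infty$. $P(g)=\lim_n\frac1n\log\sum_{\omega\in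 E_A^n}\exp(\sup_{[\omega]}S_ng)$; a real $g$ is summable if $\sum_e\exp(\sup_{[e]}g)<\infty$. $f$ is strongly regular if $P(xf)=0$ for some $x>0$ and $0<P(xf)<\infty$ for some $x>0$. *)

(* Defs.v *)
From HB Require Import structures.
From mathcomp Require Import all_boot all_order all_algebra.
From mathcomp Require Import all_classical all_reals all_analysis.
Set Implicit Arguments. Unset Strict Implicit. Unset Printing Implicit Defensive.
Import Order.TTheory GRing.Theory Num.Theory.
Local Open Scope classical_set_scope.
Local Open Scope ring_scope.

Section SymbolicDynamics.
Variables (E : countType) (A : E -> E -> bool).

Definition admissible_seq (rho : nat -> E) : Prop := forall i, A (rho i) (rho i.+1).

Definition admissible_word (w : seq E) : Prop :=
  (0 < size w)%N /\ forall i, (i.+1 < size w)%N -> forall x0, A (nth x0 w i) (nth x0 w i.+1).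

Definition words_n (n : nat) : set (seq E) :=
  [set w | admissible_word w /\ size w = n].

Definition finitely_irreducible : Prop :=
  exists Omega : seq (seq E), (forall w, w \in Omega -> admissible_word w) /\
    forall e e', exists2 w, w \in Omega & admissible_word (e :: w ++ [:: e']).

Definition concat (w : seq E) (rho : nat -> E) : nat -> E :=
  fun i => if (i < size w)%N then nth (rho 0%N) w i else rho (i - size w)%N.

Definition shift (rho : nat -> E) : nat -> E := fun i => rho i.+1.

Definition cylinder (w : seq E) : set (nat -> E) :=
  [set rho | admissible_seq rho /\ forall i, (i < size w)%N -> rho i = nth (rho 0%N) w i].

Definition words_before (rho : nat -> E) : set (seq E) :=
  [set w | admissible_word w /\ admissible_seq (concat w rho)].

Definition agree_upto (n : nat) (rho rho' : nat -> E) : Prop :=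
  forall i, (i < n)%N -> rho i = rho' i.

Variable R : realType.

Definition birkhoff (n : nat) (f : (nat -> E) -> R) (rho : nat -> E) : R :=
  \sum_(j < n) f (iter j shift rho).

Definition holder_bounded (alpha : R) (f : (nat -> E) -> R) : Prop :=
  exists C : R, forall (n : nat) (rho rho' : nat -> E), (1 <= n)%N ->
    admissible_seq rho -> admissible_seq rho' -> agree_upto n rho rho' ->
    `|f rho - f rho'| * expR (alpha * (n - 1)%:R) <= C.

Definition holder_type (f : (nat -> E) -> R) : Prop :=
  exists2 alpha : R, 0 < alpha & holder_bounded alpha f.

Local Open Scope ereal_scope.

Definition partition_fun (g : (nat -> E) -> R) (n : nat) : \bar R :=
  \esum_(w in words_n n)
     expeR (ereal_sup [set (birkhoff n g rho)%:E | rho in cylinder w]).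

Definition pressure_is (g : (nat -> E) -> R) (p : \bar R) : Prop :=
  (fun n : nat => (n.+1%:R)^-1%:E * lne (partition_fun g n.+1)) @ \oo --> p.

Definition strongly_regular (f : (nat -> E) -> R) : Prop :=
  (exists2 x : R, (0 < x)%R & pressure_is (fun rho => x * f rho)%R 0) /\
  (exists2 x : R, (0 < x)%R &
     exists2 p : R, (0 < p)%R & pressure_is (fun rho => x * f rho)%R p%:E).

Definition M_fun (f : (nat -> E) -> R) (rho : nat -> E) (T : R) : \bar R :=
  ereal_sup [set (size w)%:R%:E | w in
    [set w | words_before rho w /\ (- T <= birkhoff (size w) f (concat w rho))%R]].

Definition m_fun (f : (nat -> E) -> R) (rho : nat -> E) (T : R) : \bar R :=
  ereal_sup [set (size w)%:R%:E | w in
    [set w | words_before rho w /\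
       forall w', words_before rho w' -> (size w' <= size w)%N ->
         (- T <= birkhoff (size w') f (concat w' rho))%R]].

End SymbolicDynamics.

(* Main.v *)
Require Import Defs.
From HB Require Import structures.
From mathcomp Require Import all_boot all_order all_algebra.
From mathcomp Require Import all_classical all_reals all_analysis.
Import Order.TTheory GRing.Theory Num.Theory.
Local Open Scope classical_set_scope.
Local Open Scope ring_scope.
From mathcomp Require Import lra zify.

Section Fek.
Local Open Scope ereal_scope.
Lemma ecvg_sandwich {R : realType} {T : Type} (F : set_system T) {FF : Filter F}
  (u : T -> \bar R) (l : \bar R) :
  (forall a, a < l -> \forall x \near F, a < u x) ->
  (forall b, l < b -> \forall x \near F, u x < b) -> u @ F --> l.
Proof.
move=> Hlo Hhi A /=; rewrite itv_nbhsE => -[i [oi li] iA].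
apply: (filterS iA).
move: i oi li {iA} => [[[] a|[]] [[] b|[]]] //= _; rewrite in_itv /=.
- move=> /andP[la lb].
  apply: filterS2 (Hlo a la) (Hhi b lb) => x /= h1 h2; rewrite /= in_itv /= h1 h2.
  done.
- rewrite andbT => la; apply: filterS (Hlo a la) => x /= h1; rewrite /= in_itv /= h1.
  done.
- move=> lb; apply: filterS (Hhi b lb) => x /= h1; rewrite /= in_itv /= h1.
  done.
- by move=> _; apply: nearW => x; rewrite /= in_itv.
Qed.

Lemma iter_sup {R : realType} (G : R -> \bar R) (T0 K N u x : R) :
  (1 <= T0)%R -> (0 <= K)%R -> (T0 + K <= u)%R ->
  (forall a b x y : R, (T0 <= a)%R -> (T0 <= b)%R -> x%:E < G a -> y%:E < G b ->
      (x + y - N)%:E <= G (a + b + K)%R) ->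
  (x + N)%:E < G (u - K)%R ->
  forall q : nat, forall z : R, (z < q.+1%:R * x)%R -> (z + N)%:E < G (q.+1%:R * u - K)%R.
Proof.
move=> T01 K0 uT Hsup Hx q; elim: q => [|q IH] z.
  rewrite !mul1r => zx; apply: le_lt_trans Hx; rewrite lee_fin; lra.
move=> zx.
set d := ((q.+2)%:R * x - z)%R.
have d0 : (0 < d)%R by rewrite /d subr_gt0.
have dE : d = ((q.+2)%:R * x - z)%R by [].
clearbody d.
have h1 := IH ((q.+1)%:R * x - d / 3)%R.
have h2 : (x - d / 3 + N)%:E < G (u - K)%R.
  apply: le_lt_trans Hx; rewrite lee_fin; lra.
have uK : (T0 <= u - K)%R by lra.
have qu : (T0 <= q.+1%:R * u - K)%R.
  have : (u <= q.+1%:R * u)%R.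
    rewrite -[leLHS]mul1r ler_wpM2r //; first lra.
    by rewrite ler1n.
  lra.
have h1' : (q.+1%:R * x - d / 3 < q.+1%:R * x)%R by lra.
have := Hsup _ _ _ _ qu uK (h1 h1') h2.
have -> : (q.+1%:R * u - K + (u - K) + K = q.+2%:R * u - K)%R.
  rewrite [in RHS]mulrSr; lra.
apply: lt_le_trans; rewrite lte_fin.
rewrite mulrSr in dE; lra.
Qed.

Lemma fekete {R : realType} (G : R -> \bar R) (T0 K N : R) :
  (1 <= T0)%R -> (0 <= K)%R -> (0 <= N)%R ->
  (forall a b : R, (a <= b)%R -> G a <= G b) ->
  (forall T : R, (T0 <= T)%R -> 0 <= G T) ->
  (forall a b x y : R, (T0 <= a)%R -> (T0 <= b)%R -> x%:E < G a -> y%:E < G b ->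
      (x + y - N)%:E <= G (a + b + K)%R) ->
  exists l : \bar R, (fun T : R => (G T * (T^-1)%:E)%E) @ +oo%R --> l.
Proof.
move=> T01 K0 N0 Gmono G0 Hsup.
set T1 := (T0 + K)%R.
set S := [set (G (u - K)%R - N%:E) * (u^-1)%:E | u in [set u : R | (T1 <= u)%R]].
exists (ereal_sup S); apply: ecvg_sandwich.
- move=> a aS.
  case: (ltP a 0) => a0.
    exists T0; split; first by rewrite num_real.
    move=> T T0T; apply: lt_le_trans a0 _; apply: mule_ge0; first exact/G0/ltW.
    by rewrite lee_fin invr_ge0; lra.
  case: a aS a0 => [r| |] //; last by rewrite ltNge leey.
  move=> rS; rewrite lee_fin => r0.
  have [y [u uT1 <-] ry] := ereal_sup_gt rS.
  move: uT1; rewrite /= => uT1.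
  have u0 : (0 < u)%R by rewrite /T1 in uT1; lra.
  have [x rux xG] : exists2 x : R, (r * u < x)%R & (x + N)%:E < G (u - K)%R.
    move: ry; case: (G (u - K)%R) => [g| |] ry.
    + rewrite -EFinB -EFinM lte_fin ltr_pdivlMr // in ry.
      exists ((r * u + (g - N)) / 2)%R; first lra.
      rewrite lte_fin; lra.
    + by exists (r * u + 1)%R; [lra|rewrite ltry].
    + by move: ry; rewrite /= mulNyr gtr0_sg ?invr_gt0 // mul1e ltNge leNye.
  have xru : (0 < x - r * u)%R by lra.
  exists (Num.max (T0 + u) ((x + 1) * u / (x - r * u)))%R; split; first by rewrite num_real.
  move=> T; rewrite gt_max => /andP[T0u Tb].
  have T0' : (0 < T)%R by lra.
  set n := Num.trunc ((T + K) / u).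
  have Tu0 : (0 <= (T + K) / u)%R by rewrite divr_ge0 //; lra.
  have /andP[nle nlt] := truncn_itv Tu0.
  have n1 : (1 <= n)%N.
    by rewrite truncn_gt0 ler_pdivlMr // mul1r; lra.
  have nuT : (n%:R * u - K <= T)%R by rewrite ler_pdivlMr // in nle; lra.
  have : (r * T <= n%:R * x - 1)%R.
    have Tb' : ((x + 1) * u <= T * (x - r * u))%R.
      by rewrite -ler_pdivrMr //; apply: ltW.
    set c := ((T + K) / u)%R in nle nlt.
    have cu : (c * u = T + K)%R by rewrite /c mulrVK // unitfE gt_eqF.
    have nc : (c - 1 < n%:R)%R by rewrite -addn1 natrD in nlt; lra.
    have x0 : (0 <= x)%R by have := mulr_ge0 r0 (ltW u0); lra.
    have h8 : (0 <= (n%:R - (c - 1)) * x * u)%R.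
      by rewrite !mulr_ge0 // ?subr_ge0 ?ltW.
    have h9 : (0 <= K * x)%R by rewrite mulr_ge0.
    have h7 : (n%:R * x * u >= (T - u) * x)%R by nra.
    suff : ((r * T) * u <= (n%:R * x - 1) * u)%R by rewrite ler_pM2r.
    nra.
  move=> rT.
  case: n nle nlt n1 nuT rT => [//|q] _ _ _ nuT rT.
  have hq1 : ((q.+1%:R * x - 1) < q.+1%:R * x)%R by lra.
  have hq := @iter_sup _ G T0 K N u x T01 K0 uT1 Hsup xG q _ hq1.
  have hG := Gmono _ _ nuT.
  have rTG : (r * T)%:E < G T.
    apply: lt_le_trans hG; apply: le_lt_trans hq; rewrite lee_fin; lra.
  move: rTG; case: (G T) => [g| |] //= rg.
    by rewrite -EFinM lte_fin ltr_pdivlMr // mulrC.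
  by rewrite mulyr gtr0_sg ?invr_gt0 // mul1e ltry.
- move=> b Sb.
  have T10 : (0 < T1)%R by rewrite /T1; lra.
  have Sninf : -oo < ereal_sup S.
    apply: (@lt_le_trans _ _ ((G (T1 - K)%R - N%:E) * (T1^-1)%:E)).
      have := G0 (T1 - K)%R; rewrite /T1 addrK lexx => /(_ isT).
      case: (G T0) => [g| |] //= g0.
        by rewrite -EFinB -EFinM ltNyr.
      by rewrite mulyr gtr0_sg ?invr_gt0 // mul1e.
    by apply: ereal_sup_ubound; exists T1 => //=.
  have Hub : forall T, (T0 <= T)%R -> (G T - N%:E) * ((T + K)^-1)%:E <= ereal_sup S.
    move=> T T0T; apply: ereal_sup_ubound; exists (T + K)%R; first by rewrite /= /T1; lra.
    by rewrite addrK.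
  move: Sb Sninf Hub; case: (ereal_sup S) => [l| |] //= lb _ Hub; last by rewrite ltNge leey in lb.
  have Gfin : forall T, (T0 <= T)%R -> exists2 g : R, G T = g%:E & (g <= l * (T + K) + N)%R.
    move=> T T0T; have := Hub T T0T; have := G0 T T0T.
    have TK0 : (0 < T + K)%R by lra.
    case: (G T) => [g| |] //= _.
      rewrite -EFinB -EFinM lee_fin ler_pdivrMr // => h; exists g => //; lra.
    by rewrite mulyr gtr0_sg ?invr_gt0 // mul1e leye_eq.
  case: b lb => [r| |] //= lr.
    rewrite lte_fin in lr.
    exists (T0 + (`|l| * K + N) / (r - l))%R; split; first by rewrite num_real.
    move=> T TM.
    have rl0 : (0 < r - l)%R by lra.
    have h0 : (0 <= (`|l| * K + N) / (r - l))%R.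
      apply: divr_ge0; last lra. apply: addr_ge0 => //; apply: mulr_ge0 => //.
    have T0T : (T0 <= T)%R by lra.
    have T0' : (0 < T)%R by lra.
    have [g -> gle] := Gfin T T0T.
    rewrite -EFinM lte_fin ltr_pdivrMr //.
    have h1 : (`|l| * K + N < (r - l) * T)%R.
      by rewrite -ltr_pdivrMl // mulrC; lra.
    have h2 : (l * K <= `|l| * K)%R by rewrite ler_wpM2r // ler_norm.
    nra.
  exists T0; split; first by rewrite num_real.
  move=> T TM.
  have [g -> _] := Gfin T (ltW TM).
  by rewrite -EFinM ltry.
Qed.

End Fek.

Section Dyn.
Variables (E : countType) (A : E -> E -> bool).

Lemma concat_nil (x : nat -> E) : concat [::] x = x.
Proof. by apply: funext => i; rewrite /concat /= subn0. Qed.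

Lemma concat0 (w : seq E) x : concat w x 0 = head (x 0%N) w.
Proof. by case: w. Qed.

Lemma concat_consS a (w : seq E) x i : concat (a :: w) x i.+1 = concat w x i.
Proof.
by rewrite /concat /= ltnS subSS.
Qed.

Lemma adm_cons a (w : seq E) x :
  admissible_seq A (concat (a :: w) x) <->
  A a (head (x 0%N) w) /\ admissible_seq A (concat w x).
Proof.
split.
  move=> h; split; first by have := h 0%N; rewrite concat_consS !concat0; apply.
  by move=> i; have := h i.+1; rewrite !concat_consS.
move=> [h1 h2] [|i]; first by rewrite concat_consS !concat0.
by rewrite !concat_consS.
Qed.

Lemma adm_concatP a (u : seq E) y :
  admissible_seq A (concat (a :: u) y) <->
  [/\ path A a u, A (last a u) (y 0%N) & admissible_seq A y].
Proof.
elim: u a => [|b u IH] a.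
  split; first by move/adm_cons; rewrite concat_nil /= => -[].
  by move=> [_ h1 h2]; apply/adm_cons; rewrite concat_nil.
split.
  move/adm_cons => [/= h1 /IH [h2 h3 h4]]; split=> //=; exact/andP.
move=> [/= /andP[h1 h2] h3 h4]; apply/adm_cons; split=> //; exact/IH.
Qed.

Lemma adm_wordP a (u : seq E) : admissible_word A (a :: u) <-> path A a u.
Proof.
split.
  move=> [_ h]; apply/(pathP a) => i iu.
  by have := h i iu a.
move=> /(pathP a) h; split => // i iu x0.
rewrite (set_nth_default a x0 iu) (set_nth_default a x0 (ltnW iu)).
exact: h.
Qed.

Lemma adm_word_of_concat (w : seq E) x :
  (0 < size w)%N -> admissible_seq A (concat w x) -> admissible_word A w.
Proof.
case: w => // a u _ /adm_concatP [h _ _]; exact/adm_wordP.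
Qed.

Lemma concat_cat (u v : seq E) x : concat (u ++ v) x = concat u (concat v x).
Proof.
apply: funext => i; rewrite /concat size_cat.
case: (ltnP i (size u)) => iu.
  rewrite (ltn_addr (size v) iu) nth_cat iu; exact: set_nth_default.
case: (ltnP i (size u + size v)) => iuv.
  rewrite nth_cat ltnNge iu /= ifT; last by rewrite ltn_subLR.
  by [].
rewrite ifF; first by rewrite subnDA.
by apply/negbTE; rewrite -leqNgt leq_subRL.
Qed.

Lemma iter_shiftE j (x : nat -> E) i : iter j (@Defs.shift E) x i = x (i + j)%N.
Proof.
elim: j i => [|j IH] i; first by rewrite addn0.
by rewrite iterS /Defs.shift IH addSnnS.
Qed.

Lemma iter_shift_concat (w : seq E) x :
  iter (size w) (@Defs.shift E) (concat w x) = x.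
Proof.
apply: funext => i; rewrite iter_shiftE /concat ifF ?addnK //.
by rewrite ltnNge leq_addl.
Qed.

Lemma adm_iter_shift j x : admissible_seq A x -> admissible_seq A (iter j (@Defs.shift E) x).
Proof. by move=> h i; rewrite !iter_shiftE. Qed.

Lemma adm_concat_suffix (u v : seq E) x :
  admissible_seq A (concat (u ++ v) x) -> admissible_seq A (concat v x).
Proof.
by move=> h; rewrite -(iter_shift_concat u (concat v x)) -concat_cat; apply: adm_iter_shift.
Qed.


Variable R : realType.
Implicit Types f : (nat -> E) -> R.

Lemma birkhoffD n k f x :
  birkhoff (n + k) f x = birkhoff n f x + birkhoff k f (iter n (@Defs.shift E) x).
Proof.
rewrite /birkhoff big_split_ord /=; congr (_ + _).
by apply: eq_bigr => j _; rewrite /= addnC iterD.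
Qed.

Lemma birkhoff_concat (u : seq E) n f y :
  birkhoff (size u + n) f (concat u y) = birkhoff (size u) f (concat u y) + birkhoff n f y.
Proof. by rewrite birkhoffD iter_shift_concat. Qed.

Lemma geom_bound (q : R) n : 0 <= q < 1 -> \sum_(j < n) q ^+ (n - j.+1) <= (1 - q)^-1.
Proof.
move=> /andP[q0 q1].
rewrite (reindex_inj rev_ord_inj) /=.
have -> : \sum_(j < n) q ^+ (n - (n - j.+1).+1) = \sum_(j < n) q ^+ j.
  by apply: eq_bigr => j _; rewrite subnSK // subKn // ltnW.
have q10 : 0 < 1 - q by rewrite subr_gt0.
rewrite -[(1 - q)^-1]mul1r ler_pdivlMr // mulrC.
have -> : (1 - q) * \sum_(i < n) q ^+ i = 1 - q ^+ n.
  by rewrite -opprB mulNr -subrX1 opprB.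
rewrite lerBlDr lerDl; exact: exprn_ge0.
Qed.

Lemma distortion f (alpha C : R) : 0 < alpha -> 0 <= C ->
  (forall (n : nat) (rho rho' : nat -> E), (1 <= n)%N ->
    admissible_seq A rho -> admissible_seq A rho' -> agree_upto n rho rho' ->
    `|f rho - f rho'| * expR (alpha * (n - 1)%:R) <= C) ->
  forall (w : seq E) x y, admissible_seq A (concat w x) -> admissible_seq A (concat w y) ->
  `|birkhoff (size w) f (concat w x) - birkhoff (size w) f (concat w y)| <= C / (1 - expR (- alpha)).
Proof.
move=> a0 C0 HC w x y hx hy.
set q := expR (- alpha).
have q01 : 0 <= q < 1 by rewrite expR_ge0 /= expR_lt1 oppr_lt0.
rewrite /birkhoff -sumrB; apply: le_trans (ler_norm_sum _ _ _) _.
apply: (@le_trans _ _ (\sum_(j < size w) C * q ^+ (size w - j.+1))).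
  apply: ler_sum => j _.
  set n := (size w - j)%N.
  have n1 : (1 <= n)%N by rewrite subn_gt0.
  have ag : agree_upto n (iter j (@Defs.shift E) (concat w x)) (iter j (@Defs.shift E) (concat w y)).
    move=> i ilt; rewrite !iter_shiftE /concat.
    have hij : (i + j < size w)%N by rewrite addnC -ltn_subRL.
    rewrite hij; exact: set_nth_default hij.
  have := HC n _ _ n1 (@adm_iter_shift j _ hx) (@adm_iter_shift j _ hy) ag.
  rewrite -ler_pdivlMr ?expR_gt0 // -expRN -mulNr expRM_natr subn1 -subnS.
  by [].
rewrite -mulr_sumr ler_wpM2l //; exact: geom_bound.
Qed.


Lemma pred_exists (Om : seq (seq E)) :
  (forall e e', exists2 w, w \in Om & admissible_word A (e :: w ++ [:: e'])) ->
  forall b, exists a, A a b.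
Proof.
move=> H b; have [w _ /adm_wordP] := H b b.
by rewrite cat_path /= andbT => /andP[_ h]; exists (last b w).
Qed.

Lemma words_exist (Om : seq (seq E)) rho :
  (forall e e', exists2 w, w \in Om & admissible_word A (e :: w ++ [:: e'])) ->
  admissible_seq A rho ->
  forall n, exists w, size w = n.+1 /\ admissible_seq A (concat w rho).
Proof.
move=> H hr; elim => [|n [w [sw hw]]].
  have [a ha] := @pred_exists _ H (rho 0%N).
  by exists [:: a]; split => //; apply/adm_cons; rewrite concat_nil.
have [a ha] := @pred_exists _ H (head (rho 0%N) w).
by exists (a :: w); split; [rewrite /= sw | apply/adm_cons].
Qed.

Lemma size_bound (Om : seq (seq E)) : exists N : nat, forall g, g \in Om -> (size g <= N)%N.
Proof.
elim: Om => [|g Om [N HN]]; first by exists 0%N.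
exists (maxn (size g) N) => g'; rewrite inE => /orP[/eqP ->|/HN h].
  exact: leq_maxl.
exact: leq_trans h (leq_maxr _ _).
Qed.

Lemma middle_bound f (D : R) (Om : seq (seq E)) :
  (forall (w : seq E) x y, admissible_seq A (concat w x) -> admissible_seq A (concat w y) ->
     `|birkhoff (size w) f (concat w x) - birkhoff (size w) f (concat w y)| <= D) ->
  exists K0 : R, 0 <= K0 /\ forall g, g \in Om -> forall z,
    admissible_seq A (concat g z) -> `|birkhoff (size g) f (concat g z)| <= K0.
Proof.
move=> HD; elim: Om => [|g Om [K [K0 HK]]]; first by exists 0.
have [[z0 hz0]|nz] := pselect (exists z, admissible_seq A (concat g z)).
  exists (K + (`|birkhoff (size g) f (concat g z0)| + D)); split.
    apply: addr_ge0 => //; apply: addr_ge0 => //.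
    exact: le_trans (normr_ge0 _) (HD g z0 z0 hz0 hz0).
  move=> g'; rewrite inE => /orP[/eqP -> z hz|/HK h z hz].
    have h1 := HD g z z0 hz hz0.
    have h2 := ler_normD (birkhoff (size g) f (concat g z) - birkhoff (size g) f (concat g z0))
                 (birkhoff (size g) f (concat g z0)).
    rewrite subrK in h2; lra.
  have := h z hz; have := le_trans (normr_ge0 _) (HD g z0 z0 hz0 hz0).
  have := normr_ge0 (birkhoff (size g) f (concat g z0)).
  lra.
exists K; split => // g'; rewrite inE => /orP[/eqP -> z hz|/HK //].
by exfalso; apply: nz; exists z.
Qed.


Lemma adm_glue (a1 a2 : E) (u1 u2 g : seq E) rho :
  admissible_seq A (concat (a1 :: u1) rho) ->
  admissible_seq A (concat (a2 :: u2) rho) ->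
  admissible_word A (last a1 u1 :: g ++ [:: a2]) ->
  admissible_seq A (concat ((a1 :: u1) ++ g ++ a2 :: u2) rho).
Proof.
move=> /adm_concatP [p1 _ _] /adm_concatP [p2 l2 hr] /adm_wordP pg.
rewrite cat_path /= andbT in pg; case/andP: pg => pg1 pg2.
rewrite cat_cons; apply/adm_concatP; split => //.
  by rewrite cat_path p1 /= cat_path pg1 /= pg2.
by rewrite !last_cat.
Qed.

Lemma M_super f rho (Om : seq (seq E)) (D K0 : R) :
  (forall e e', exists2 w, w \in Om & admissible_word A (e :: w ++ [:: e'])) ->
  (forall (w : seq E) x y, admissible_seq A (concat w x) -> admissible_seq A (concat w y) ->
     `|birkhoff (size w) f (concat w x) - birkhoff (size w) f (concat w y)| <= D) ->
  (forall g, g \in Om -> forall z,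
    admissible_seq A (concat g z) -> `|birkhoff (size g) f (concat g z)| <= K0) ->
  forall a b x y : R, (x%:E < M_fun A f rho a)%E -> (y%:E < M_fun A f rho b)%E ->
  ((x + y)%:E <= M_fun A f rho (a + b + (K0 + D)))%E.
Proof.
move=> HC HD HM a b x y /ereal_sup_gt [_ [w1 [[aw1 hw1] Sw1] <-] xw1].
move=> /ereal_sup_gt [_ [w2 [[aw2 hw2] Sw2] <-] yw2].
case: w1 aw1 hw1 Sw1 xw1 => [[]//|a1 u1] _ hw1 Sw1 xw1.
case: w2 aw2 hw2 Sw2 yw2 => [[]//|a2 u2] _ hw2 Sw2 yw2.
have [g gOm hg] := HC (last a1 u1) a2.
set w1 := a1 :: u1 in hw1 Sw1 xw1 *.
set w2 := a2 :: u2 in hw2 Sw2 yw2 *.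
have hw := @adm_glue _ _ _ _ _ _ hw1 hw2 hg.
apply: le_ereal_sup_tmp; exists (size (w1 ++ g ++ w2))%:R%:E.
  exists (w1 ++ g ++ w2) => //; split.
    by split => //; apply: (@adm_word_of_concat _ _ _ hw).
  have hgw2 : admissible_seq A (concat (g ++ w2) rho) by apply: (@adm_concat_suffix w1 _ _ hw).
  have hgw2' : admissible_seq A (concat g (concat w2 rho)) by rewrite -concat_cat.
  rewrite size_cat concat_cat birkhoff_concat size_cat concat_cat birkhoff_concat.
  have h1 := HD w1 _ _ (eq_ind _ _ hw _ (concat_cat _ _ _)) hw1.
  have h2 := HM g gOm _ hgw2'.
  rewrite ler_norml in h1; case/andP: h1 => h1 _.
  rewrite ler_norml in h2; case/andP: h2 => h2 _.
  rewrite concat_cat in h1.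
  lra.
rewrite lee_fin; apply: (@le_trans _ _ (size w1 + size w2)%:R).
  by rewrite natrD; rewrite !lte_fin in xw1 yw2; lra.
by rewrite ler_nat !size_cat leq_add2l leq_addl.
Qed.


Lemma adm_glue2 (a0 : E) (u g : seq E) y rho :
  admissible_seq A (concat (a0 :: u) y) ->
  admissible_word A (last a0 u :: g ++ [:: rho 0%N]) ->
  admissible_seq A rho ->
  admissible_seq A (concat ((a0 :: u) ++ g) rho).
Proof.
move=> /adm_concatP [p1 _ _] /adm_wordP pg hr.
rewrite cat_path /= andbT in pg; case/andP: pg => pg1 pg2.
rewrite cat_cons; apply/adm_concatP; split => //.
  by rewrite cat_path p1 /= pg1.
by rewrite last_cat.
Qed.

Lemma m_super f rho (Om : seq (seq E)) (N : nat) (D K0 : R) :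
  (forall e e', exists2 w, w \in Om & admissible_word A (e :: w ++ [:: e'])) ->
  (forall (w : seq E) x y, admissible_seq A (concat w x) -> admissible_seq A (concat w y) ->
     `|birkhoff (size w) f (concat w x) - birkhoff (size w) f (concat w y)| <= D) ->
  (forall g, g \in Om -> forall z,
    admissible_seq A (concat g z) -> `|birkhoff (size g) f (concat g z)| <= K0) ->
  (forall g, g \in Om -> (size g <= N)%N) ->
  admissible_seq A rho -> 0 <= K0 + D ->
  forall a b x y : R, 0 <= a -> 0 <= b ->
  (x%:E < m_fun A f rho a)%E -> (y%:E < m_fun A f rho b)%E ->
  ((x + y - N%:R)%:E <= m_fun A f rho (a + b + (K0 + D)))%E.
Proof.
move=> HC HD HM HN hr KD0 a b x y a0 b0.
move=> /ereal_sup_gt [_ [w1 [[aw1 hw1] P1] <-] xw1].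
move=> /ereal_sup_gt [_ [w2 [[aw2 hw2] P2] <-] yw2].
rewrite !lte_fin in xw1 yw2.
have w2pos : (0 < size w2)%N by case: aw2.
case: (leqP (size w1) N) => w1N.
  apply: le_ereal_sup_tmp; exists (size w2)%:R%:E.
    exists w2 => //; split => // w' hw' sw'.
    have := P2 w' hw' sw'; lra.
  rewrite lee_fin.
  have : ((size w1)%:R <= N%:R :> R) by rewrite ler_nat.
  lra.
set n := (size w1 + size w2 - N)%N.
have [w [sw hw]] := @words_exist _ _ HC hr n.-1.
have n0 : (0 < n)%N by rewrite /n; lia.
rewrite prednK // in sw.
apply: le_ereal_sup_tmp; exists (size w)%:R%:E.
  exists w => //; split.
    by split => //; apply: (@adm_word_of_concat _ _ _ hw); rewrite sw.
  move=> w' [aw' hw'] sw'.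
  case: (leqP (size w') (size w2)) => w'2.
    have := P2 w' (conj aw' hw') w'2; lra.
  set k := (size w' - size w2)%N.
  set u := take k w'; set v := drop k w'.
  have ew : w' = u ++ v by rewrite cat_take_drop.
  have sv : size v = size w2 by rewrite size_drop /k; lia.
  have su : size u = k by rewrite size_take /k; case: ifP => //; lia.
  rewrite ew in hw'.
  have hv : admissible_seq A (concat v rho) by apply: (@adm_concat_suffix u _ _ hw').
  have Sv : - b <= birkhoff (size v) f (concat v rho).
    apply: P2; last by rewrite sv.
    by split => //; apply: (@adm_word_of_concat _ _ _ hv); rewrite sv.
  have hw'' : admissible_seq A (concat u (concat v rho)) by rewrite -concat_cat.
  case Eu : u => [|a1 u1].
    by move: su; rewrite Eu /= /k; lia.
  rewrite Eu in hw''.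
  have [g gOm hg] := HC (last a1 u1) (rho 0%N).
  have hug := @adm_glue2 _ _ _ _ _ hw'' hg hr.
  have hg' : admissible_seq A (concat g rho) by apply: (@adm_concat_suffix (a1 :: u1) _ _ hug).
  have Sug : - a <= birkhoff (size ((a1 :: u1) ++ g)) f (concat ((a1 :: u1) ++ g) rho).
    apply: P1.
      by split => //; apply: (@adm_word_of_concat _ _ _ hug).
    have := HN g gOm; move: sw'; rewrite size_cat -Eu su /k sw /n; move: w1N w'2; set s1 := size w1; set s2 := size w2; set s3 := size w'; set s4 := size g. lia.
  rewrite size_cat concat_cat birkhoff_concat in Sug.
  have h1 := HM g gOm _ hg'.
  have hug' : admissible_seq A (concat (a1 :: u1) (concat g rho)) by rewrite -concat_cat.
  have h2 := HD (a1 :: u1) _ _ hw'' hug'.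
  rewrite ler_norml in h1; case/andP: h1 => _ h1.
  rewrite ler_norml in h2; case/andP: h2 => h2 _.
  rewrite ew Eu size_cat concat_cat birkhoff_concat.
  lra.
rewrite lee_fin sw /n natrB; last by lia.
rewrite natrD; lra.
Qed.

End Dyn.

Section Wrap.
Local Open Scope ereal_scope.

Lemma wrap {R : realType} (G : R -> \bar R) (K N : R) :
  (0 <= K)%R -> (0 <= N)%R ->
  (forall a b : R, (a <= b)%R -> G a <= G b) ->
  (forall T : R, G T = -oo \/ 0 <= G T) ->
  (forall a b x y : R, (0 <= a)%R -> (0 <= b)%R -> x%:E < G a -> y%:E < G b ->
      (x + y - N)%:E <= G (a + b + K)%R) ->
  exists l : \bar R, (fun T : R => (G T * (T^-1)%:E)%E) @ +oo%R --> l.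
Proof.
move=> K0 N0 Gm G0 Hs.
have [[T1 hT1]|none] := pselect (exists T, G T <> -oo).
  have gT1 : 0 <= G T1 by case: (G0 T1).
  apply: (@fekete _ G (Num.max T1 1%R) K N) => //.
  - by rewrite le_max lexx orbT.
  - move=> T hT; apply: le_trans gT1 (Gm _ _ _).
    by apply: le_trans hT; rewrite le_max lexx.
  - move=> a b x y ha hb; apply: Hs.
      by apply: le_trans ha; rewrite le_max ler01 orbT.
    by apply: le_trans hb; rewrite le_max ler01 orbT.
exists -oo; apply: ecvg_sandwich.
  by move=> a; rewrite ltNge leNye.
move=> b bN; exists 0%R; split; first by rewrite num_real.
move=> T T0.
have -> : G T = -oo by apply: contrapT => h; apply: none; exists T.
by rewrite mulNyr gtr0_sg ?invr_gt0 // mul1e.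
Qed.

End Wrap.

Lemma M_mono (E : countType) (A : E -> E -> bool) (R : realType) f rho (a b : R) :
  a <= b -> (M_fun A f rho a <= M_fun A f rho b)%E.
Proof.
move=> ab; apply: ereal_sup_le => _ [w [hw Sw] <-]; exists w => //; split => //.
by apply: le_trans Sw; rewrite lerN2.
Qed.

Lemma m_mono (E : countType) (A : E -> E -> bool) (R : realType) f rho (a b : R) :
  a <= b -> (m_fun A f rho a <= m_fun A f rho b)%E.
Proof.
move=> ab; apply: ereal_sup_le => _ [w [hw Sw] <-]; exists w => //; split => // w' h1 h2.
by apply: le_trans (Sw w' h1 h2); rewrite lerN2.
Qed.

Lemma esup_nat_ge0 {R : realType} (T : Type) (P : set T) (sz : T -> nat) :
  ereal_sup [set ((sz w)%:R : R)%:E | w in P] = -oo%E \/ (0 <= ereal_sup [set ((sz w)%:R : R)%:E | w in P])%E.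
Proof.
have [[w Pw]|none] := pselect (exists w, P w).
  right; apply: le_ereal_sup_tmp; exists (sz w)%:R%:E; first by exists w.
  by rewrite lee_fin.
left; apply/ereal_sup_ninfty => y [w Pw <-]; exfalso; apply: none; by exists w.
Qed.

Theorem mainTheorem2 (E : countType) (A : E -> E -> bool) (R : realType)
  (f : (nat -> E) -> R) (delta : R) (rho : nat -> E) :
  finitely_irreducible A ->
  holder_type A f ->
  strongly_regular A f ->
  0 < delta ->
  pressure_is A (fun x => delta * f x) 0%E ->
  admissible_seq A rho ->
  (exists l : \bar R,
     (fun T : R => (m_fun A f rho T * (T^-1)%:E)%E) @ +oo --> l) /\
  (exists l : \bar R,
     (fun T : R => (M_fun A f rho T * (T^-1)%:E)%E) @ +oo --> l).
Proof.
move=> [Om [_ HC]] [alpha a0 [C HCh]] _ _ _ hr.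
have C0 : 0 <= C.
  have := HCh 1%N rho rho (leqnn _) hr hr (fun _ _ => erefl).
  by rewrite subrr normr0 mul0r.
have HD := @distortion E A R f alpha C a0 C0 HCh.
set D := C / (1 - expR (- alpha)) in HD.
have D0 : 0 <= D.
  have hr' : admissible_seq A (concat [::] rho) by rewrite concat_nil.
  exact: le_trans (normr_ge0 _) (HD [::] rho rho hr' hr').
have [K0 [K00 HM]] := @middle_bound E A R f D Om HD.
have [N HN] := @size_bound E Om.
have KD0 : 0 <= K0 + D by apply: addr_ge0.
split.
  apply: (@wrap _ _ (K0 + D) N%:R) => //.
  - by move=> a b; apply: m_mono.
  - by move=> T; apply: esup_nat_ge0.
  - by move=> a b x y ha hb hx hy; apply: (@m_super E A R f rho Om N D K0 HC HD HM HN hr KD0 _ _ _ _ ha hb hx hy).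
apply: (@wrap _ _ (K0 + D) N%:R) => //.
- by move=> a b; apply: M_mono.
- by move=> T; apply: esup_nat_ge0.
- move=> a b x y ha hb hx hy; apply: le_trans (@M_super E A R f rho Om D K0 HC HD HM _ _ _ _ hx hy).
  by rewrite lee_fin lerBlDr lerDl.
Qed.
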